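(* Let $G=(V,E)$ be a network, $s,t\in V$, and $S\in[S_{min},1]$. Run the CO-TSCMQ algorithm on $G,s,t,S$. If there exists a survivable connection from $s$ to $t$ with survivability level at least $S$, the algorithm returns a survivable connection that is an optimal solution of the CO-Constrained Survivability Min-QoS problem. Otherwise, the algorithm fails.
   Context: A network is a directed graph $G=(V,E)$, $N=|V|$, $M=|E|$. Each link $e$ has a failure probability $p_e\in(0,p_{max}]$ with $p_{max}<1$, and a positive weight $w_e$. Paths are identified with their sets of links. $P^{(s,t)}$ is the set of simple $s$–$t$ paths, and $S_{min}=(1-p_{max})^M$. A survivable connection is a pair $(\pi_1,\pi_2)\in P^{(s,t)}\times P^{(s,t)}$; the two paths may coincide. Its survivability level is $\prod_{e\in\pi_1\cap\pi_2}(1-p_e)$, equal to $1$ if $\pi_1\cap\pi_2=\emptyset$. Its CO-weight is $W_{CO}(\pi_1,\pi_2)=\sum_{e\in\pi_1\cup\pi_2}w_e$. CO-Constrained Survivability Min-QoS (CO-CSMQ) problem: find a survivable connection minimizing $W_{CO}$ subject to survivability level $\ge S$. Restricted Shortest Path (RSP) problem: given a graph in which each link has a length $l_e$ and a time $t_e$, a bound $T$, and two nodes, find a path between them minimizing $\sum l_e$ subject to $\sum t_e\le T$. CO-TSCMQ algorithm: 1. Build a multigraph $\tilde G$ on node set $V$. For each link $e=(u,v)\in E$, add a ''simple link'' $u\to v$ with weight $w_e$ and survivability cost $-\ln(1-p_e)$. 2. For each ordered pair of nodes $(u,v)$ for which a pair of link-disjoint $u$–$v$ paths exists, compute a pair of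 link-disjoint $u$–$v$ paths of minimum total weight (an edge-disjoint shortest pair, EDSPoP). Add a ''disjoint link'' $u\to v$ with weight equal to that total weight and survivability cost $0$. 3. Solve exactly the RSP instance on $\tilde G$ from $s$ to $t$ that minimizes total weight subject to total survivability cost $\le -\ln S$. If no feasible path exists, fail. 4. Otherwise, from the returned path $\tilde\pi$ build $(\pi_1,\pi_2)$. Each simple link contributes its original link to both $\pi_1$ and $\pi_2$. Each disjoint link contributes one path of its EDSPoP to $\pi_1$ and the other to $\pi_2$. Return $(\pi_1,\pi_2)$. *)

(* Defs.v *)
From HB Require Import structures.
From mathcomp Require Import all_boot all_order all_algebra.
From mathcomp Require Import reals exp.
Set Implicit Arguments. Unset Strict Implicit. Unset Printing Implicit Defensive.
Import Order.TTheory GRing.Theory Num.Theory.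
Local Open Scope ring_scope.

Section Network.
Variables (R : realType) (V : finType) (adj : rel V).

Definition link := (V * V)%type.
Definition links_of : {set link} := [set e : link | adj e.1 e.2].
Definition nlinks : nat := #|links_of|.

Definition spath (s t : V) (q : seq V) : bool :=
  match q with
  | [::] => false
  | x :: r => [&& x == s, last x r == t, path adj x r & uniq (x :: r)]
  end.

Definition links_seq (q : seq V) : {set link} :=
  [set e : link | e \in zip q (behead q)].

Definition is_stpath (s t : V) (A : {set link}) : Prop :=
  exists q, spath s t q /\ A = links_seq q.

Variables (p w : link -> R).

Definition wt (A : {set link}) : R := \sum_(e in A) w e.
Definition surv (A B : {set link}) : R := \prod_(e in A :&: B) (1 - p e).
Definition WCO (A B : {set link}) : R := \sum_(e in A :|: B) w e.

Definition feasible_conn (s t : V) (S : R) (A B : {set link}) : Prop :=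
  is_stpath s t A /\ is_stpath s t B /\ S <= surv A B.

Definition dpair_exists (u v : V) : Prop :=
  exists A B, is_stpath u v A /\ is_stpath u v B /\ A :&: B = set0.

Definition EDSPoP_spec (D : V -> V -> {set link} * {set link}) : Prop :=
  forall u v, dpair_exists u v ->
    [/\ is_stpath u v (D u v).1, is_stpath u v (D u v).2,
        (D u v).1 :&: (D u v).2 = set0 &
        forall A B, is_stpath u v A -> is_stpath u v B -> A :&: B = set0 ->
          wt (D u v).1 + wt (D u v).2 <= wt A + wt B].

(* Links of the multigraph ~G: inl e = simple link e, inr (u,v) = disjoint link u -> v. *)
Definition tlink := (link + link)%type.
Definition tsrc (l : tlink) : V := match l with inl e => e.1 | inr e => e.1 end.
Definition tdst (l : tlink) : V := match l with inl e => e.2 | inr e => e.2 end.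
Definition tvalid (l : tlink) : Prop :=
  match l with inl e => adj e.1 e.2 | inr e => dpair_exists e.1 e.2 end.

Fixpoint twalk (x : V) (ls : seq tlink) (t : V) : Prop :=
  match ls with
  | [::] => x = t
  | l :: ls' => [/\ tvalid l, tsrc l = x & twalk (tdst l) ls' t]
  end.

Definition tpath (s t : V) (ls : seq tlink) : Prop :=
  twalk s ls t /\ uniq (s :: map tdst ls).

Variable D : V -> V -> {set link} * {set link}.

Definition tweight (l : tlink) : R :=
  match l with inl e => w e | inr e => wt (D e.1 e.2).1 + wt (D e.1 e.2).2 end.
Definition tcost (l : tlink) : R :=
  match l with inl e => - ln (1 - p e) | inr _ => 0 end.

Definition tW (ls : seq tlink) : R := \sum_(l <- ls) tweight l.
Definition tC (ls : seq tlink) : R := \sum_(l <- ls) tcost l.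

Definition RSP_feasible (s t : V) (S : R) (ls : seq tlink) : Prop :=
  tpath s t ls /\ tC ls <= - ln S.
Definition RSP_optimal (s t : V) (S : R) (ls : seq tlink) : Prop :=
  RSP_feasible s t S ls /\ forall ls', RSP_feasible s t S ls' -> tW ls <= tW ls'.

(* step 4: build (pi1, pi2) from the returned path *)
Definition part1 (l : tlink) : {set link} :=
  match l with inl e => [set e] | inr e => (D e.1 e.2).1 end.
Definition part2 (l : tlink) : {set link} :=
  match l with inl e => [set e] | inr e => (D e.1 e.2).2 end.
Definition build (ls : seq tlink) : {set link} * {set link} :=
  (\bigcup_(l <- ls) part1 l, \bigcup_(l <- ls) part2 l).

End Network.

(* Main.v *)
Require Import Defs.
From HB Require Import structures.
From mathcomp Require Import all_boot all_order all_algebra.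
From mathcomp Require Import reals exp.
From mathcomp Require Import zify ring lra.
From Stdlib Require Import Classical.
Set Implicit Arguments. Unset Strict Implicit. Unset Printing Implicit Defensive.
Import Order.TTheory GRing.Theory Num.Theory.

Section Links.
Variables (V : finType) (adj : rel V).

Lemma links1 (x : V) : links_seq [:: x] = set0.
Proof. by apply/setP => e; rewrite !inE. Qed.

Lemma links_cons (x y : V) r : links_seq [:: x, y & r] = (x, y) |: links_seq (y :: r).
Proof. by apply/setP => e; rewrite !inE. Qed.

Lemma links_cat (x : V) r r' :
  links_seq (x :: r ++ r') = links_seq (x :: r) :|: links_seq (last x r :: r').
Proof.
elim: r x => [|y r IH] x /=; first by rewrite links1 set0U.
by rewrite links_cons IH links_cons setUA.
Qed.

Lemma links_mem (x : V) r e : e \in links_seq (x :: r) -> (e.1 \in x :: r) /\ (e.2 \in x :: r).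
Proof.
elim: r x => [|y r IH] x; first by rewrite links1 inE.
rewrite links_cons => /setU1P [-> | he].
  by rewrite /= !inE !eqxx /= orbT.
have [h1 h2] := IH _ he.
by split; rewrite inE ?h1 ?h2 orbT.
Qed.

Lemma links_adj (x : V) r e : path adj x r -> e \in links_seq (x :: r) -> adj e.1 e.2.
Proof.
elim: r x => [|y r IH] x; first by rewrite links1 inE.
rewrite links_cons /= => /andP [hxy hp] /setU1P [-> //| ].
exact: IH.
Qed.

Lemma shortcut (x : V) r : path adj x r -> exists r',
  [/\ path adj x r', uniq (x :: r'), last x r' = last x r, {subset r' <= r} &
      links_seq (x :: r') \subset links_seq (x :: r)].
Proof.
move: {2}(size r) (leqnn (size r)) => n; elim: n x r => [|n IH] x r.
  case: r => // _ _; exists [::]; split => //.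
case: (boolP (x \in r)) => [xr | xnr].
  case/splitPr: xr => r1 r2 hsz hp.
  have hp2 : path adj x r2 by move: hp; rewrite cat_path /= => /and3P [].
  have hsz2 : size r2 <= n by move: hsz; rewrite size_cat /= addnS ltnS; apply: leq_trans; exact: leq_addl.
  have [r' [h1 h2 h3 h4 h5]] := IH x r2 hsz2 hp2.
  exists r'; split => //.
  - by rewrite h3 last_cat /=.
  - by move=> z /h4 hz; rewrite mem_cat inE hz !orbT.
  - apply: (subset_trans h5); rewrite links_cat links_cons.
    by apply/subsetP => e he; rewrite in_setU in_setU1 he !orbT.
case: r xnr => [|y r0] xnr hsz hp.
  by exists [::]; split => //.
have hp0 : path adj y r0 by case/andP: hp.
have [r' [h1 h2 h3 h4 h5]] := IH y r0 hsz hp0.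
exists (y :: r'); split.
- by rewrite /= (andP hp).1.
- rewrite cons_uniq h2 andbT; apply/negP => hx; move: xnr; rewrite inE.
  by case/orP: (hx : x \in y :: r') => [-> // | /h4 ->]; rewrite orbT.
- by [].
- by move=> z; rewrite !inE => /orP [-> // | /h4 ->]; rewrite orbT.
- rewrite !links_cons; apply/subsetP => e /setU1P [-> | he]; first by rewrite setU11.
  by rewrite in_setU1 (subsetP h5 e he) orbT.
Qed.

Lemma stpathP (s t : V) A : is_stpath adj s t A ->
  exists r, [/\ path adj s r, last s r = t, uniq (s :: r) & A = links_seq (s :: r)].
Proof.
case=> [[|x r] [] //=] /and4P [/eqP -> /eqP h2 h3 h4] ->.
by exists r; split.
Qed.

Lemma stpath_of (x : V) r : path adj x r -> uniq (x :: r) ->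
  is_stpath adj x (last x r) (links_seq (x :: r)).
Proof. move=> hp hu; exists (x :: r); split => //; rewrite /spath eqxx eqxx hp; exact: hu. Qed.

Lemma walk_stpath (x : V) r : path adj x r -> exists A,
  is_stpath adj x (last x r) A /\ A \subset links_seq (x :: r).
Proof.
move=> hp; have [r' [h1 h2 h3 h4 h5]] := shortcut hp.
by exists (links_seq (x :: r')); rewrite -h3; split => //; apply: stpath_of.
Qed.


Lemma links_split (x : V) a v b :
  links_seq (x :: a ++ v :: b) = links_seq (x :: a) :|: ((last x a, v) |: links_seq (v :: b)).
Proof. by rewrite links_cat links_cons. Qed.

Lemma first_link (K : {set link V}) (x : V) r : links_seq (x :: r) :&: K != set0 ->
  exists a v b, [/\ r = a ++ v :: b, (last x a, v) \in K & links_seq (x :: a) :&: K = set0].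
Proof.
elim: r x => [|y r IH] x; first by rewrite links1 set0I eqxx.
case: (boolP ((x, y) \in K)) => hxy.
  by move=> _; exists [::], y, r; split => //; rewrite links1 set0I.
rewrite links_cons setIUl => hne.
have hne' : links_seq (y :: r) :&: K != set0.
  apply: contraNneq hne => ->; rewrite setU0; apply/eqP/setP => e; rewrite !inE.
  by apply/negP => /andP [/eqP -> ]; rewrite (negbTE hxy).
have [a [v [b [-> h2 h3]]]] := IH y hne'.
exists (y :: a), v, b; split => //; rewrite links_cons setIUl h3 setU0.
apply/setP => e; rewrite !inE; apply/negP => /andP [/eqP -> ]; by rewrite (negbTE hxy).
Qed.

Lemma split_at (x : V) r e : e \in links_seq (x :: r) ->
  exists a b, r = a ++ e.2 :: b /\ last x a = e.1.
Proof.
elim: r x => [|y r IH] x; first by rewrite links1 inE.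
rewrite links_cons => /setU1P [-> | he]; first by exists [::], r.
have [a [b [-> h]]] := IH y he.
by exists (y :: a), b.
Qed.

Lemma split_disj (x : V) a v b : uniq (x :: a ++ v :: b) ->
  [/\ (last x a, v) \notin links_seq (x :: a), (last x a, v) \notin links_seq (v :: b)
    & links_seq (x :: a) :&: links_seq (v :: b) = set0].
Proof.
rewrite -cat_cons cat_uniq => /and3P [_ hd _].
have hv : v \notin x :: a by apply: contra hd => hv; apply/hasP; exists v => //; rewrite inE eqxx.
have hl : last x a \notin v :: b.
  apply/negP => hl; move/hasP: hd; apply; exists (last x a) => //; exact: mem_last.
split.
- by apply/negP => /links_mem [_ /= h]; rewrite h in hv.
- by apply/negP => /links_mem [/= h _]; rewrite h in hl.
- apply/setP => e; rewrite in_setI in_set0; apply/negP => /andP [h1 h2].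
  have [h1' _] := links_mem h1; have [h2' _] := links_mem h2.
  by move/hasP: hd; apply; exists e.1.
Qed.

End Links.


Local Open Scope ring_scope.


Section Sums.
Variables (R : realDomainType) (T : finType).
Implicit Types (A B C : {set T}) (f : T -> R).

Lemma sumUD f A B : \sum_(e in A :|: B) f e = \sum_(e in A) f e + \sum_(e in B :\: A) f e.
Proof. by rewrite (big_setID A) /= setUK setDUl setDv set0U. Qed.

Lemma sum_disjU f A B : A :&: B = set0 ->
  \sum_(e in A :|: B) f e = \sum_(e in A) f e + \sum_(e in B) f e.
Proof.
move=> h; rewrite sumUD; congr (_ + _); apply: eq_bigl => e.
rewrite !inE; case: (boolP (e \in B)) => eB; rewrite ?andbF ?andbT //.
apply/negP => eA; move: h => /setP /(_ e); rewrite !inE eA eB //.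
Qed.

Lemma sum_sub f A B : A \subset B -> (forall e, e \in B -> 0 <= f e) ->
  \sum_(e in A) f e <= \sum_(e in B) f e.
Proof.
move=> hAB hf; rewrite [X in _ <= X](big_setID A) /=.
have -> : B :&: A = A by apply/setIidPr.
rewrite lerDl; apply: sumr_ge0 => e; rewrite inE => /andP [_]; exact: hf.
Qed.

Lemma sumU_le f A B : (forall e, e \in B -> 0 <= f e) ->
  \sum_(e in A :|: B) f e <= \sum_(e in A) f e + \sum_(e in B) f e.
Proof.
move=> hf; rewrite sumUD lerD2l; apply: sum_sub => //; exact: subsetDl.
Qed.

Lemma sum_ge0 f A : (forall e, e \in A -> 0 <= f e) -> 0 <= \sum_(e in A) f e.
Proof. by move=> h; apply: sumr_ge0. Qed.

Lemma sum_sub_lt f A B e : A \subset B :\ e -> e \in B -> (forall e, e \in B -> 0 <= f e) ->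
   0 < f e -> \sum_(e in A) f e < \sum_(e in B) f e.
Proof.
move=> hA eB hf he; apply: (le_lt_trans (sum_sub hA _)).
  by move=> x; rewrite inE => /andP [_]; exact: hf.
by rewrite [X in _ < X](big_setD1 e) //= ltrDr.
Qed.

End Sums.


Section L1.
Variables (R : realType) (V : finType) (adj : rel V) (p w : link V -> R).
Variable D : V -> V -> {set link V} * {set link V}.
Hypothesis hw : forall e : link V, adj e.1 e.2 -> 0 < w e.
Hypothesis hpr : forall e : link V, adj e.1 e.2 -> 0 < p e < 1.
Hypothesis hD : EDSPoP_spec adj w D.

Definition cst (e : link V) : R := - ln (1 - p e).

Lemma cst_ge0 e : adj e.1 e.2 -> 0 <= cst e.
Proof.
move=> h; case/andP: (hpr h) => h1 h2; rewrite /cst oppr_ge0; apply: ln_le0; lra.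
Qed.

Definition adjset (A : {set link V}) := forall e, e \in A -> adj e.1 e.2.

Lemma adjset_links x r : path adj x r -> adjset (links_seq (x :: r)).
Proof. move=> hp e; exact: links_adj. Qed.

Lemma w_ge0 A : adjset A -> forall e, e \in A -> 0 <= w e.
Proof. by move=> hA e /hA /hw /ltW. Qed.
Lemma c_ge0 A : adjset A -> forall e, e \in A -> 0 <= cst e.
Proof. by move=> hA e /hA /cst_ge0. Qed.

Definition sp (x t : V) (r : seq V) := [/\ path adj x r, last x r = t & uniq (x :: r)].
Definition spair (x t : V) (r1 r2 : seq V) := sp x t r1 /\ sp x t r2.

Lemma twalk_inr x t A B : is_stpath adj x t A -> is_stpath adj x t B -> A :&: B = set0 ->
  twalk adj x [:: inr (x, t)] t /\ tweight w D (inr (x, t)) <= wt w A + wt w B.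
Proof.
move=> hA hB hAB; have [h1 h2 h3 h4] := hD (ex_intro _ A (ex_intro _ B (conj hA (conj hB hAB)))).
split; first by split => //; exists A, B.
exact: h4.
Qed.

Lemma disjP (T : finType) (A B : {set T}) :
  (forall X, X \in A -> X \in B -> False) -> A :&: B = set0.
Proof.
move=> h; apply/setP => X; rewrite in_setI in_set0.
by apply/negP => /andP [h1 h2]; exact: h X h1 h2.
Qed.

Lemma L1_empty x t r1 r2 : spair x t r1 r2 ->
  links_seq (x :: r1) :&: links_seq (x :: r2) = set0 ->
  exists ls, [/\ twalk adj x ls t,
     tW w D ls <= wt w (links_seq (x :: r1) :|: links_seq (x :: r2)) &
     tC p ls <= \sum_(e in links_seq (x :: r1) :&: links_seq (x :: r2)) cst e].
Proof.
move=> [[hp1 hl1 hu1] [hp2 hl2 hu2]] hK.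
have hA := stpath_of hp1 hu1; have hB := stpath_of hp2 hu2.
rewrite hl1 in hA; rewrite hl2 in hB.
have [hw1 hwt] := twalk_inr hA hB hK.
exists [:: inr (x, t)]; split => //.
- by rewrite /tW big_cons big_nil addr0 /wt sum_disjU.
- by rewrite /tC big_cons big_nil hK big_set0 /= addr0.
Qed.

Lemma setU_split (T : finType) (A1 A2 B1 B2 : {set T}) e :
  (A1 :|: (e |: A2)) :|: (B1 :|: (e |: B2)) = (A1 :|: B1) :|: (e |: (A2 :|: B2)).
Proof.
apply/setP => X; rewrite !inE.
by case: (X \in A1); case: (X \in A2); case: (X \in B1); case: (X \in B2); case: (X == e).
Qed.

Lemma L1 n : forall x t r1 r2, spair x t r1 r2 ->
  (#|links_seq (x :: r1) :&: links_seq (x :: r2)| <= n)%N ->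
  exists ls, [/\ twalk adj x ls t,
     tW w D ls <= wt w (links_seq (x :: r1) :|: links_seq (x :: r2)) &
     tC p ls <= \sum_(e in links_seq (x :: r1) :&: links_seq (x :: r2)) cst e].
Proof.
elim: n => [|n IH] x t r1 r2 hsp hn.
  by apply: L1_empty => //; apply/eqP; rewrite -cards_eq0 -leqn0.
case: (eqVneq (links_seq (x :: r1) :&: links_seq (x :: r2)) set0) => hK0.
  exact: L1_empty.
move: hsp => [[hp1 hl1 hu1] [hp2 hl2 hu2]].
set A := links_seq (x :: r1); set B := links_seq (x :: r2); set K := A :&: B.
have hAadj : adjset A by exact: adjset_links.
have hBadj : adjset B by exact: adjset_links.
have hKA : K \subset A by exact: subsetIl.
have hKB : K \subset B by exact: subsetIr.
have hK1 : A :&: K != set0 by rewrite (setIidPr hKA).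
have hK2 : B :&: K != set0 by rewrite (setIidPr hKB).
have [a1 [v1 [b1 [er1 he1 ha1]]]] := first_link hK1.
have [a2 [v2 [b2 [er2 he2 ha2]]]] := first_link hK2.
have hA : A = links_seq (x :: a1) :|: ((last x a1, v1) |: links_seq (v1 :: b1))
  by rewrite /A er1 links_split.
have hB : B = links_seq (x :: a2) :|: ((last x a2, v2) |: links_seq (v2 :: b2))
  by rewrite /B er2 links_split.
have hu1' := hu1; have hu2' := hu2.
rewrite er1 in hu1'; rewrite er2 in hu2'.
have hua1 : uniq (x :: a1) by move: hu1'; rewrite -cat_cons cat_uniq => /and3P [].
have hub1 : uniq (v1 :: b1) by move: hu1'; rewrite -cat_cons cat_uniq => /and3P [].
have hua2 : uniq (x :: a2) by move: hu2'; rewrite -cat_cons cat_uniq => /and3P [].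
have hub2 : uniq (v2 :: b2) by move: hu2'; rewrite -cat_cons cat_uniq => /and3P [].
move: (hp1) (hl1); rewrite er1 cat_path last_cat /= => /and3P [hpa1 hadj1 hpb1] hlb1.
move: (hp2) (hl2); rewrite er2 cat_path last_cat /= => /and3P [hpa2 hadj2 hpb2] hlb2.
have [d11 d12 d13] := split_disj hu1'.
have [d21 d22 d23] := split_disj hu2'.
move: he1 hA d11 d12; move Ee: (last x a1, v1) => e he1 hA d11 d12.
move: he2 hB d21 d22; move Ef: (last x a2, v2) => f he2 hB d21 d22.
have hP1A : links_seq (x :: a1) \subset A by rewrite hA subsetUl.
have hP2B : links_seq (x :: a2) \subset B by rewrite hB subsetUl.
have hA2A : links_seq (v1 :: b1) \subset A
  by rewrite hA; apply/subsetP => X hX; rewrite !in_setU hX !orbT.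
have hB2B : links_seq (v2 :: b2) \subset B
  by rewrite hB; apply/subsetP => X hX; rewrite !in_setU hX !orbT.
have hP1K : forall X, X \in links_seq (x :: a1) -> X \in K -> False.
  by move=> X h1 h2; move/setP: ha1 => /(_ X); rewrite in_setI h1 h2 in_set0.
have hP2K : forall X, X \in links_seq (x :: a2) -> X \in K -> False.
  by move=> X h1 h2; move/setP: ha2 => /(_ X); rewrite in_setI h1 h2 in_set0.
have inK : forall X, X \in A -> X \in B -> X \in K by move=> X h1 h2; rewrite in_setI h1 h2.
have hKc : forall X, X \in K -> 0 <= cst X.
  by move=> X hX; apply: (c_ge0 hAadj); move/subsetP: hKA; apply.
have hABw : forall X, X \in A :|: B -> 0 <= w X.
  by move=> X; case/setUP => hX; [exact: (w_ge0 hAadj) | exact: (w_ge0 hBadj)].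
case: (eqVneq e f) => hef.
-
  have [eu ev] : last x a1 = last x a2 /\ v1 = v2 by move: Ee; rewrite hef -Ef => [[-> ->]].
  rewrite -hef in he2 hB d21 d22; subst v2.
  set u := last x a1 in eu Ee hpb1.
  set P1 := links_seq (x :: a1); set P2 := links_seq (x :: a2).
  set Q1 := links_seq (v1 :: b1); set Q2 := links_seq (v1 :: b2).
  have hs1 := stpath_of hpa1 hua1.
  have hPdisj : P1 :&: P2 = set0.
    apply: disjP => X h1 h2; apply: (hP1K X h1); apply: inK.
      by move/subsetP: hP1A; apply.
    by move/subsetP: hP2B; apply.
  have hs2 := stpath_of hpa2 hua2.
  rewrite -eu in hs2.
  have [[hv0 hs0 _] hwt] := twalk_inr hs1 hs2 hPdisj.
  have hQK : Q1 :&: Q2 \subset K :\ e.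
    apply/subsetP => X; rewrite in_setI => /andP [h1 h2].
    rewrite in_setD1 inK; first (rewrite andbT; apply/negP => /eqP hXe).
    - by move: d12; rewrite -/e -hXe h1.
    - by move/subsetP: hA2A; apply.
    - by move/subsetP: hB2B; apply.
  have hcard : (#|Q1 :&: Q2| <= n)%N.
    have h1 := subset_leq_card hQK; have h2 := cardsD1 e K; rewrite he1 add1n in h2.
    apply: leq_trans h1 _; rewrite -ltnS -h2; exact: hn.
  have hsp' : spair v1 t b1 b2 by split; split.
  have [ls [hw' hW' hC']] := IH _ _ _ _ hsp' hcard.
  exists [:: inr (x, u), inl e & ls]; split.
  + split => //; split; rewrite -Ee //.
  + rewrite /tW !big_cons -/(tW w D ls).
    have -> : A :|: B = (P1 :|: P2) :|: (e |: (Q1 :|: Q2)).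
      by rewrite hA hB setU_split.
    rewrite /wt sum_disjU; last first.
      apply: disjP => X; rewrite in_setU => /orP [hX | hX]; rewrite in_setU1 in_setU.
      * case/orP => [/eqP hXe | /orP [h | h]].
        - by move: d11; rewrite -/e -hXe hX.
        - by move/setP: d13 => /(_ X); rewrite in_setI hX h in_set0.
        - apply: (hP1K X hX); apply: inK; first by move/subsetP: hP1A; apply.
          by move/subsetP: hB2B; apply.
      * case/orP => [/eqP hXe | /orP [h | h]].
        - by move: d21; rewrite -/e -hXe hX.
        - apply: (hP2K X hX); apply: inK; last by move/subsetP: hP2B; apply.
          by move/subsetP: hA2A; apply.
        - by move/setP: d23 => /(_ X); rewrite in_setI hX h in_set0.
    rewrite sum_disjU // big_setU1 /=; last first.
      by rewrite in_setU negb_or d12 d22.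
    apply: lerD; first exact: hwt.
    rewrite /= lerD2l; exact: hW'.
  + rewrite /tC !big_cons /= add0r -/(tC p ls).
    apply: le_trans (_ : \sum_(X in e |: (Q1 :&: Q2)) cst X <= _).
      by rewrite big_setU1 /= ?lerD2l // in_setI negb_and d12.
    apply: sum_sub => //; apply/subsetP => X /setU1P [-> // | hX].
    by move/subsetP: hQK => /(_ X hX); rewrite in_setD1 => /andP [].
- (* crossing case: uncross *)
  set P1 := links_seq (x :: a1); set P2 := links_seq (x :: a2).
  set A2 := links_seq (v1 :: b1); set B2 := links_seq (v2 :: b2).
  have mem0 : forall (C1 C2 : {set link V}) X, C1 :&: C2 = set0 -> X \in C1 -> X \in C2 -> False.
    by move=> C1 C2 X h h1 h2; move/setP: h => /(_ X); rewrite in_setI h1 h2 in_set0.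
  have heB2 : e \in B2.
    have : e \in B by move/subsetP: hKB; apply.
    rewrite hB in_setU in_setU1 => /orP [h | /orP [/eqP h | //]].
      by case: (hP2K e h he1).
    by rewrite h eqxx in hef.
  have hfA2 : f \in A2.
    have : f \in A by move/subsetP: hKA; apply.
    rewrite hA in_setU in_setU1 => /orP [h | /orP [/eqP h | //]].
      by case: (hP1K f h he2).
    by rewrite h eqxx in hef.
  have [c2 [d2 [eb2 hc2]]] := split_at heB2.
  have [c1 [d1 [eb1 hc1]]] := split_at hfA2.
  have e2 : e.2 = v1 by rewrite -Ee.
  have f2 : f.2 = v2 by rewrite -Ef.
  rewrite e2 in eb2; rewrite f2 in eb1.
  have hZ : links_seq (v1 :: d2) \subset B2.
    rewrite /B2 eb2 links_split; apply/subsetP => X hX; by rewrite !in_setU hX !orbT.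
  have hY : links_seq (v2 :: d1) \subset A2.
    rewrite /A2 eb1 links_split; apply/subsetP => X hX; by rewrite !in_setU hX !orbT.
  set Z := links_seq (v1 :: d2) in hZ; set Y := links_seq (v2 :: d1) in hY.
  have hpW1 : path adj x (a1 ++ v1 :: d2).
    rewrite cat_path hpa1 /= hadj1 /=; move: hpb2; rewrite eb2 cat_path => /andP [_ /=].
    by case/andP.
  have hpW2 : path adj x (a2 ++ v2 :: d1).
    rewrite cat_path hpa2 /= hadj2 /=; move: hpb1; rewrite eb1 cat_path => /andP [_ /=].
    by case/andP.
  have hlW1 : last x (a1 ++ v1 :: d2) = t by rewrite last_cat /= -hlb2 eb2 last_cat.
  have hlW2 : last x (a2 ++ v2 :: d1) = t by rewrite last_cat /= -hlb1 eb1 last_cat.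
  have hLW1 : links_seq (x :: a1 ++ v1 :: d2) = P1 :|: (e |: Z) by rewrite links_split Ee.
  have hLW2 : links_seq (x :: a2 ++ v2 :: d1) = P2 :|: (f |: Y) by rewrite links_split Ef.
  have [r1' [hq1 hq2 hq3 _ hq5]] := shortcut hpW1.
  have [r2' [hs1 hs2 hs3 _ hs5]] := shortcut hpW2.
  rewrite hlW1 in hq3; rewrite hlW2 in hs3; rewrite hLW1 in hq5; rewrite hLW2 in hs5.
  have hsp' : spair x t r1' r2' by split; split.
  have hL1AB : P1 :|: (e |: Z) \subset A :|: B.
    apply/subsetP => X /setUP [h | /setU1P [-> | h]]; rewrite in_setU.
    - by move/subsetP: hP1A => /(_ X h) ->.
    - by move/subsetP: hKA => /(_ e he1) ->.
    - by move/subsetP: hB2B => /(_ X (subsetP hZ X h)) ->; rewrite orbT.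
  have hL2AB : P2 :|: (f |: Y) \subset A :|: B.
    apply/subsetP => X /setUP [h | /setU1P [-> | h]]; rewrite in_setU.
    - by move/subsetP: hP2B => /(_ X h) ->; rewrite orbT.
    - by move/subsetP: hKB => /(_ f he2) ->; rewrite orbT.
    - by move/subsetP: hA2A => /(_ X (subsetP hY X h)) ->.
  have hKs : links_seq (x :: r1') :&: links_seq (x :: r2') \subset K :\ e.
    apply/subsetP => X; rewrite in_setI => /andP [h1 h2].
    move/subsetP: hq5 => /(_ X h1) {h1}; move/subsetP: hs5 => /(_ X h2) {h2}.
    move=> /setUP [h2 | /setU1P [h2 | h2]] /setUP [h1 | /setU1P [h1 | h1]];
      rewrite in_setD1.
    + by exfalso; apply: (hP1K X h1); apply: inK; [move/subsetP: hP1A; apply | move/subsetP: hP2B; apply].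
    + by case: (hP2K X h2); rewrite h1.
    + have h1' : X \in B2 by move/subsetP: hZ; apply.
      by case: (mem0 _ _ X d23 h2 h1').
    + by exfalso; apply: (hP1K X h1); rewrite h2.
    + by move: hef; rewrite -h1 -h2 eqxx.
    + have h1' : X \in B2 by move/subsetP: hZ; apply.
      by rewrite -h2 h1' in d22.
    + have h2' : X \in A2 by move/subsetP: hY; apply.
      by case: (mem0 _ _ X d13 h1 h2').
    + have h2' : X \in A2 by move/subsetP: hY; apply.
      by rewrite -h1 h2' in d12.
    + have h1' : X \in B2 by move/subsetP: hZ; apply.
      have h2' : X \in A2 by move/subsetP: hY; apply.
      apply/andP; split.
        by apply/negP => /eqP hXe; rewrite -hXe h2' in d12.
      apply: inK; [move/subsetP: hA2A; apply | move/subsetP: hB2B; apply] => //.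
  have hcard : (#|links_seq (x :: r1') :&: links_seq (x :: r2')| <= n)%N.
    have h1 := subset_leq_card hKs; have h2 := cardsD1 e K; rewrite he1 add1n in h2.
    apply: leq_trans h1 _; rewrite -ltnS -h2; exact: hn.
  have [ls [hw' hW' hC']] := IH _ _ _ _ hsp' hcard.
  exists ls; split => //.
  + apply: (le_trans hW'); apply: sum_sub => //.
    apply/subsetP => X /setUP [h | h].
    * by move/subsetP: hL1AB; apply; move/subsetP: hq5; apply.
    * by move/subsetP: hL2AB; apply; move/subsetP: hs5; apply.
  + apply: (le_trans hC'); apply: sum_sub => //.
    apply: (subset_trans hKs); exact: subsetDl.
Qed.

End L1.


Section TShort.
Variables (R : realType) (V : finType) (adj : rel V) (p w : link V -> R).
Variable D : V -> V -> {set link V} * {set link V}.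
Hypothesis hw : forall e : link V, adj e.1 e.2 -> 0 < w e.
Hypothesis hpr : forall e : link V, adj e.1 e.2 -> 0 < p e < 1.
Hypothesis hD : EDSPoP_spec adj w D.

Lemma stpath_adjset x t A : is_stpath adj x t A -> adjset adj A.
Proof. by case/stpathP => r [h1 _ _ ->]; apply: adjset_links. Qed.

Lemma tl_ge0 l : tvalid adj l -> 0 <= tweight w D l /\ 0 <= tcost p l.
Proof.
case: l => [e | [u v]] /= h.
  by split; [exact: ltW (hw h) | have := cst_ge0 hpr h].

have [h1 h2 _ _] := hD h; split => //.
by apply: addr_ge0; apply: sum_ge0; apply: (w_ge0 hw); apply: stpath_adjset;
  [exact: h1 | exact: h2].
Qed.

Lemma twalk_valid x ls t : twalk adj x ls t -> forall l, l \in ls -> tvalid adj l.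
Proof.
elim: ls x => [|l ls IH] x //= [h1 h2 h3] l'; rewrite inE => /orP [/eqP -> // | ].
exact: IH h3 l'.
Qed.

Lemma twalk_drop x ls1 l ls2 t : twalk adj x (ls1 ++ l :: ls2) t -> twalk adj (tdst l) ls2 t.
Proof.
elim: ls1 x => [|l1 ls1 IH] x /=; first by case.
by case => _ _ /IH.
Qed.

Lemma tW_cat ls1 ls2 : tW w D (ls1 ++ ls2) = tW w D ls1 + tW w D ls2.
Proof. by rewrite /tW big_cat. Qed.
Lemma tC_cat ls1 ls2 : tC p (ls1 ++ ls2) = tC p ls1 + tC p ls2.
Proof. by rewrite /tC big_cat. Qed.

Lemma tW_ge0 ls : (forall l, l \in ls -> tvalid adj l) -> 0 <= tW w D ls /\ 0 <= tC p ls.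
Proof.
elim: ls => [|l ls IH] h; first by rewrite /tW /tC !big_nil.
rewrite /tW /tC !big_cons -/(tW w D ls) -/(tC p ls).
have [h1 h2] := tl_ge0 (h l (mem_head _ _)).
have [h3 h4] : 0 <= tW w D ls /\ 0 <= tC p ls.
  by apply: IH => l' hl'; apply: h; rewrite inE hl' orbT.
by split; apply: addr_ge0.
Qed.

Lemma tshort_gen n x ls t : (size ls <= n)%N -> twalk adj x ls t ->
  exists ls', [/\ twalk adj x ls' t, uniq (x :: map (@tdst V) ls'),
    {subset map (@tdst V) ls' <= map (@tdst V) ls}, tW w D ls' <= tW w D ls & tC p ls' <= tC p ls].
Proof.
elim: n x ls => [|n IH] x ls.
  by case: ls => // _ h; exists [::]; split.
move=> hsz hwk; case: (boolP (x \in map (@tdst V) ls)) => hx.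
  have [l [hl ->]] : exists l, l \in ls /\ x = tdst l by case/mapP: hx => l hl hxl; exists l.
  case/splitPr: hl hsz hwk => ls1 ls2 hsz hwk.
  have hw2 := twalk_drop hwk.
  have hsz2 : (size ls2 <= n)%N by move: hsz; rewrite size_cat /= addnS ltnS; apply: leq_trans; exact: leq_addl.
  have [ls' [h1 h2 h3 h4 h5]] := IH _ _ hsz2 hw2.
  have hv := twalk_valid hwk.
  have [g1 g2] : 0 <= tW w D (ls1 ++ [:: l]) /\ 0 <= tC p (ls1 ++ [:: l]).
    apply: tW_ge0 => l' hl'; apply: hv; move: hl'; rewrite !mem_cat => /orP [-> // | ].
    by rewrite inE => /eqP ->; rewrite inE eqxx orbT.
  exists ls'; split => //.
  - by move=> z /h3 hz; rewrite map_cat mem_cat /= inE hz !orbT.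
  - apply: (le_trans h4); rewrite -cat1s catA tW_cat lerDr //.
  - apply: (le_trans h5); rewrite -cat1s catA tC_cat lerDr //.
case: ls hsz hwk hx => [|l ls0] hsz hwk hx; first by exists [::]; split.
case: hwk => hv hs hw0.
have [ls' [h1 h2 h3 h4 h5]] := IH _ _ hsz hw0.
exists (l :: ls'); split => //.
- rewrite cons_uniq h2 andbT; apply: contra hx; rewrite !inE /= => /orP [-> // | /h3 ->].
  by rewrite orbT.
- by move=> z; rewrite /= !inE => /orP [-> // | /h3 ->]; rewrite orbT.
- by rewrite /tW !big_cons lerD2l.
- by rewrite /tC !big_cons lerD2l.
Qed.

Lemma tshort x ls t : twalk adj x ls t ->
  exists ls', [/\ tpath adj x t ls', tW w D ls' <= tW w D ls & tC p ls' <= tC p ls].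
Proof.
move=> h; have [ls' [h1 h2 _ h4 h5]] := tshort_gen (leqnn _) h.
by exists ls'; split.
Qed.

End TShort.


Lemma connect_uniq (T : finType) (e : rel T) x y : connect e x y ->
  exists p, [/\ path e x p, uniq (x :: p) & last x p = y].
Proof.
case/connectP => p hp ->; case/shortenP: hp => p' h1 h2 _.
by exists p'.
Qed.

Section Menger.
Variables (V L : finType) (src dst : L -> V).

Fixpoint lwalk (x : V) (r : seq L) (y : V) : bool :=
  if r is e :: r' then (src e == x) && lwalk (dst e) r' y else x == y.

Definition bal (F : {set L}) (v : V) : int :=
  \sum_(e in F) ((src e == v)%:Z - (dst e == v)%:Z).

Lemma sum_eqZ (X : {set V}) a : \sum_(v in X) ((a == v)%:Z : int) = (a \in X)%:Z.
Proof.
case: (boolP (a \in X)) => ha.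
  rewrite (bigD1 a) //= eqxx big1 ?addr0 // => v /andP [_ hv].
  by rewrite eq_sym (negbTE hv).
by rewrite big1 // => v hv; case: eqP => // h; rewrite h hv in ha.
Qed.

Lemma sum_bal (F : {set L}) (X : {set V}) :
  \sum_(v in X) bal F v = \sum_(e in F) ((src e \in X)%:Z - (dst e \in X)%:Z).
Proof.
rewrite /bal exchange_big /=; apply: eq_bigr => e _.
by rewrite sumrB !sum_eqZ.
Qed.

Lemma bal_U (A B : {set L}) v : A :&: B = set0 -> bal (A :|: B) v = bal A v + bal B v.
Proof. by move=> h; rewrite /bal sum_disjU. Qed.

Lemma bal_D (A B : {set L}) v : B \subset A -> bal (A :\: B) v = bal A v - bal B v.
Proof.
move=> h; rewrite [bal A v]/bal (big_setID B) /= (setIidPr h) addrC addrK //.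
Qed.

Lemma bal_walk x r y v : lwalk x r y -> uniq r ->
  bal [set e in r] v = (x == v)%:Z - (y == v)%:Z.
Proof.
elim: r x => [|e r IH] x /=.
  move=> /eqP -> _; rewrite /bal.
  have -> : [set e in [::]] = set0 :> {set L} by apply/setP => z; rewrite !inE.
  by rewrite big_set0 subrr.
move=> /andP [/eqP hs hw] /andP [he hu].
have -> : [set e0 in e :: r] = e |: [set e0 in r] by apply/setP => z; rewrite !inE.
rewrite /bal big_setU1 /=; last by rewrite inE.
rewrite -/(bal _ v) (IH _ hw hu) hs; ring.
Qed.

Definition relF (F : {set L}) : rel V :=
  fun u v => [exists e in F, (src e == u) && (dst e == v)].

Lemma lift_path (F : {set L}) x p : path (relF F) x p ->
  exists r, [/\ lwalk x r (last x p), {subset r <= F} & map dst r = p].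
Proof.
elim: p x => [|y p IH] x /=; first by exists [::]; split => //=.
rewrite /relF => /andP [/existsP [e /and3P [heF /eqP hs /eqP hd]] hp].
have [r [h1 h2 h3]] := IH y hp.
exists (e :: r); split => /=.
- by rewrite hs eqxx hd.
- by move=> z; rewrite inE => /orP [/eqP -> // | /h2].
- by rewrite hd h3.
Qed.

Lemma reach_walk (F : {set L}) s t : connect (relF F) s t ->
  exists r, [/\ lwalk s r t, uniq r & {subset r <= F}].
Proof.
case/connect_uniq => q [hq hu hl].
have [r [h1 h2 h3]] := lift_path hq.
exists r; split => //; first by rewrite -hl.
by apply: (@map_uniq _ _ dst); rewrite h3; case/andP: hu.
Qed.

Lemma reach_closed (F : {set L}) s e : e \in F -> connect (relF F) s (src e) ->
  connect (relF F) s (dst e).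
Proof.
move=> he h; apply: (connect_trans h); apply: connect1.
by apply/existsP; exists e; rewrite he !eqxx.
Qed.

Lemma extract (F : {set L}) s t (k : nat) : s != t -> (0 < k)%N ->
  (forall v, bal F v = k%:Z * ((s == v)%:Z - (t == v)%:Z)) ->
  exists r, [/\ lwalk s r t, uniq r & {subset r <= F}].
Proof.
move=> hst hk hb; apply: reach_walk.
apply/negPn/negP => ht.
set X := [set v | connect (relF F) s v].
have hs : s \in X by rewrite inE connect0.
have htX : t \notin X by rewrite inE.
have h1 : \sum_(v in X) bal F v = k%:Z.
  rewrite (eq_bigr _ (fun v _ => hb v)) -mulr_sumr sumrB !sum_eqZ hs (negbTE htX).
  by rewrite subr0 mulr1.
have h2 : \sum_(v in X) bal F v <= 0.
  rewrite sum_bal; apply: sumr_le0 => e he.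
  case: (boolP (src e \in X)) => hsX.
    have : dst e \in X by move: hsX; rewrite !inE; exact: reach_closed.
    by move=> ->; rewrite subrr.
  by rewrite sub0r oppr_le0.
by move: h2; rewrite h1 lez_nat leqn0; move/eqP => hk0; rewrite hk0 in hk.
Qed.


Lemma sum_ind (A : {set L}) (P : pred L) :
  \sum_(e in A) ((P e)%:Z : int) = #|[set e in A | P e]|%:Z.
Proof.
rewrite (eq_bigr (fun e => if P e then 1 else 0)); last by move=> e _; case: (P e).
rewrite -big_mkcondr /= GRing.sumr_const natz; congr Posz.
by apply: eq_card => e; rewrite !inE.
Qed.

Section Res.
Variables (H R : {set L}).

Definition ssrc (st : bool * L) := if st.1 then src st.2 else dst st.2.
Definition sdst (st : bool * L) := if st.1 then dst st.2 else src st.2.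
Definition sok (st : bool * L) := if st.1 then st.2 \in H :\: R else st.2 \in R.

Fixpoint swalk (x : V) (z : seq (bool * L)) (y : V) : bool :=
  if z is st :: z' then [&& sok st, ssrc st == x & swalk (sdst st) z' y] else x == y.

Definition res : rel V := fun u v =>
  [exists e in H :\: R, (src e == u) && (dst e == v)] ||
  [exists e in R, (dst e == u) && (src e == v)].

Lemma lift_res x q : path res x q -> exists z, swalk x z (last x q) /\ map sdst z = q.
Proof.
elim: q x => [|y q IH] x /=; first by exists [::]; rewrite /= eqxx.
rewrite /res => /andP [/orP [/existsP [e /and3P [he /eqP h1 /eqP h2]] |
                              /existsP [e /and3P [he /eqP h1 /eqP h2]]] hp].
  have [z [hz1 hz2]] := IH y hp.
  by exists ((true, e) :: z); rewrite /= /sok /ssrc /sdst /= he h1 h2 eqxx hz1 hz2.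
have [z [hz1 hz2]] := IH y hp.
by exists ((false, e) :: z); rewrite /= /sok /ssrc /sdst /= he h1 h2 eqxx hz1 hz2.
Qed.

Lemma swalk_src x z y st : swalk x z y -> st \in z -> ssrc st \in x :: map sdst z.
Proof.
elim: z x => [|st0 z IH] x //= /and3P [_ /eqP h1 h2]; rewrite inE => /orP [/eqP -> | hst].
  by rewrite h1 mem_head.
by rewrite inE (IH _ h2 hst) orbT.
Qed.

Definition Zf (z : seq (bool * L)) := [set e | (true, e) \in z].
Definition Zr (z : seq (bool * L)) := [set e | (false, e) \in z].

Lemma Zf_sub x z y : swalk x z y -> Zf z \subset H :\: R.
Proof.
elim: z x => [|[b e] z IH] x /=.
  by move=> _; apply/subsetP => e; rewrite inE.
case/and3P => hok _ hw; apply/subsetP => e'; rewrite inE in_cons => /orP [/eqP [hb he] | h].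
  by move: hok; rewrite /sok -hb -he.
by move/subsetP: (IH _ hw); apply; rewrite inE.
Qed.

Lemma Zr_sub x z y : swalk x z y -> Zr z \subset R.
Proof.
elim: z x => [|[b e] z IH] x /=.
  by move=> _; apply/subsetP => e; rewrite inE.
case/and3P => hok _ hw; apply/subsetP => e'; rewrite inE in_cons => /orP [/eqP [hb he] | h].
  by move: hok; rewrite /sok -hb -he.
by move/subsetP: (IH _ hw); apply; rewrite inE.
Qed.

Lemma zbal x z y v : swalk x z y -> uniq (x :: map sdst z) ->
  bal (Zf z) v - bal (Zr z) v = (x == v)%:Z - (y == v)%:Z.
Proof.
elim: z x => [|[b e] z IH] x /=.
  move=> /eqP -> _; rewrite /bal.
  have -> : Zf [::] = set0 by apply/setP => e; rewrite !inE.
  have -> : Zr [::] = set0 by apply/setP => e; rewrite !inE.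
  by rewrite !big_set0 !subrr.
case/and3P => hok /eqP hs hw; rewrite in_cons negb_or => /andP [/andP [hx1 hx2] hu].
have hnot : (b, e) \notin z.
  apply/negP => hin; have := swalk_src hw hin; rewrite /= hs.
  by rewrite in_cons (negbTE hx2) orbF; move/eqP => h; rewrite h eqxx in hx1.
have IH' := IH _ hw hu.
case: b hok hs hnot hw IH' hx1 hx2 hu => hok hs hnot hw IH' hx1 hx2 hu.
- have -> : Zf ((true, e) :: z) = e |: Zf z by apply/setP => e'; rewrite !inE.
  have -> : Zr ((true, e) :: z) = Zr z by apply/setP => e'; rewrite !inE.
  rewrite /bal big_setU1 /=; last by rewrite inE.
  rewrite -!/(bal _ v); move: IH'; rewrite /sdst /ssrc /= in hs *; rewrite -hs.
  move=> IH'; rewrite -addrA IH'; ring.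
- have -> : Zf ((false, e) :: z) = Zf z by apply/setP => e'; rewrite !inE.
  have -> : Zr ((false, e) :: z) = e |: Zr z by apply/setP => e'; rewrite !inE.
  rewrite [bal (e |: _) v]/bal big_setU1 /=; last by rewrite inE.
  rewrite -!/(bal _ v); move: IH'; rewrite /sdst /ssrc /= in hs *; rewrite -hs.
  move=> IH'.
  rewrite (_ : bal (Zf z) v = ((src e == v)%:Z - (y == v)%:Z) + bal (Zr z) v); first ring.
  by rewrite -IH' subrK.
Qed.

End Res.

Lemma menger2 (H : {set L}) s t : s != t ->
  (forall X : {set V}, s \in X -> t \notin X ->
     (1 < #|[set e in H | (src e \in X) && (dst e \notin X)]|)%N) ->
  exists r1 r2, [/\ lwalk s r1 t, lwalk s r2 t, {subset r1 <= H}, {subset r2 <= H}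
    & forall e, e \in r1 -> e \notin r2].
Proof.
move=> hst hcut.
have [r [hr1 hr2 hr3]] : exists r, [/\ lwalk s r t, uniq r & {subset r <= H}].
  apply: reach_walk; apply/negPn/negP => ht.
  set X := [set v | connect (relF H) s v].
  have hsX : s \in X by rewrite inE connect0.
  have htX : t \notin X by rewrite inE.
  have := hcut X hsX htX.
  suff -> : [set e in H | (src e \in X) && (dst e \notin X)] = set0 by rewrite cards0.
  apply/setP => e; rewrite !inE; apply/negP => /and3P [he h1 h2].
  by move: h2; rewrite (reach_closed he h1).
set Rs := [set e in r].
have hbR v : bal Rs v = (s == v)%:Z - (t == v)%:Z := bal_walk v hr1 hr2.
have hRH : Rs \subset H by apply/subsetP => e; rewrite inE; exact: hr3.
set Y := [set v | connect (res H Rs) s v].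
have hsY : s \in Y by rewrite inE connect0.
case: (boolP (t \in Y)) => htY; last first.
  exfalso.
  have hfwd : forall e, e \in H -> src e \in Y -> dst e \notin Y -> e \in Rs.
    move=> e he h1 h2; apply/negPn/negP => heR; move: h2; rewrite inE; apply/negP/negPn.
    rewrite inE in h1; apply: (connect_trans h1); apply: connect1; apply/orP; left.
    by apply/existsP; exists e; rewrite inE heR he !eqxx.
  have hbwd : forall e, e \in Rs -> src e \notin Y -> dst e \in Y -> False.
    move=> e he h1 h2; move: h1; rewrite inE; apply/negP/negPn.
    rewrite inE in h2; apply: (connect_trans h2); apply: connect1; apply/orP; right.
    by apply/existsP; exists e; rewrite he !eqxx.
  have hsum : \sum_(v in Y) bal Rs v = 1.
    by rewrite (eq_bigr _ (fun v _ => hbR v)) sumrB !sum_eqZ hsY (negbTE htY) subr0.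
  have hsum2 : \sum_(v in Y) bal Rs v =
      #|[set e in Rs | (src e \in Y) && (dst e \notin Y)]|%:Z.
    rewrite sum_bal -sum_ind; apply: eq_bigr => e he.
    case: (boolP (src e \in Y)) => h1; case: (boolP (dst e \in Y)) => h2;
      rewrite /= ?subrr ?subr0 //.
    by exfalso; exact: (hbwd e he h1 h2).
  have hRl : #|[set e in Rs | (src e \in Y) && (dst e \notin Y)]| = 1%N.
    by apply/eqP; rewrite -eqz_nat -hsum2 hsum.
  have hHl : [set e in H | (src e \in Y) && (dst e \notin Y)] \subset
             [set e in Rs | (src e \in Y) && (dst e \notin Y)].
    apply/subsetP => e /setIdP [he /andP [h1 h2]]; apply/setIdP; split.
      exact: hfwd.
    by rewrite h1 h2.
  have := hcut Y hsY htY; have := subset_leq_card hHl; rewrite hRl.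
  by move=> h1 h2; move: (leq_trans h2 h1).
rewrite inE in htY; case/connect_uniq: htY => q [hq hqu hql].
have [z [hz1 hz2]] := lift_res hq; rewrite hql in hz1.
have hzu : uniq (s :: map sdst z) by rewrite hz2.
set F := (Rs :\: Zr z) :|: Zf z.
have hZf := Zf_sub hz1; have hZr := Zr_sub hz1.
have hbF v : bal F v = 2%:Z * ((s == v)%:Z - (t == v)%:Z).
  rewrite /F bal_U; last first.
    apply/setP => e; rewrite in_setI in_setD in_set0; apply/negP => /andP [/andP [_ h1] h2].
    by move/subsetP: hZf => /(_ e h2); rewrite in_setD h1.
  rewrite bal_D // hbR.
  have := zbal v hz1 hzu; move=> h.
  have -> : (s == v)%:Z - (t == v)%:Z - bal (Zr z) v + bal (Zf z) v =
            ((s == v)%:Z - (t == v)%:Z) + (bal (Zf z) v - bal (Zr z) v) by ring.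
  rewrite h; ring.
have hFH : F \subset H.
  apply/subsetP => e; rewrite /F in_setU in_setD => /orP [/andP [_ h] | h].
    by move/subsetP: hRH; apply.
  by move/subsetP: hZf => /(_ e h); rewrite in_setD => /andP [].
have [ra [hra1 hra2 hra3]] := extract hst (isT : (0 < 2)%N) hbF.
set Fa := [set e in ra].
have hFa : Fa \subset F by apply/subsetP => e; rewrite inE; exact: hra3.
have hbF' v : bal (F :\: Fa) v = 1%:Z * ((s == v)%:Z - (t == v)%:Z).
  rewrite bal_D // hbF (bal_walk v hra1 hra2); ring.
have [rb [hrb1 hrb2 hrb3]] := extract hst (isT : (0 < 1)%N) hbF'.
exists ra, rb; split => //.
- by move=> e /hra3 he; move/subsetP: hFH; apply.
- by move=> e /hrb3; rewrite in_setD => /andP [_ he]; move/subsetP: hFH; apply.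
- move=> e hea; apply/negP => /hrb3; rewrite in_setD inE hea //.
Qed.

End Menger.


Section L2.
Variables (R : realType) (V : finType) (adj : rel V) (p w : link V -> R).
Variable D : V -> V -> {set link V} * {set link V}.
Hypothesis hw : forall e : link V, adj e.1 e.2 -> 0 < w e.
Hypothesis hpr : forall e : link V, adj e.1 e.2 -> 0 < p e < 1.
Hypothesis hD : EDSPoP_spec adj w D.

Definition Sl (l : tlink V) := part1 D l :|: part2 D l.
Definition Ul (ls : seq (tlink V)) := (build D ls).1 :|: (build D ls).2.
Definition El (ls : seq (tlink V)) := \bigcup_(l <- ls) (part1 D l :&: part2 D l).
Fixpoint ND (ls : seq (tlink V)) : Prop :=
  if ls is l :: ls' then Sl l :&: Ul ls' = set0 /\ ND ls' else True.

Lemma build_cons l ls :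
  build D (l :: ls) = (part1 D l :|: (build D ls).1, part2 D l :|: (build D ls).2).
Proof. by rewrite /build !big_cons. Qed.
Lemma build_nil : build D [::] = (set0, set0).
Proof. by rewrite /build !big_nil. Qed.
Lemma Ul_cons l ls : Ul (l :: ls) = Sl l :|: Ul ls.
Proof.
rewrite /Ul /Sl build_cons /=; apply/setP => X; rewrite !in_setU.
by case: (X \in part1 D l); case: (X \in part2 D l); case: (X \in (build D ls).1);
  case: (X \in (build D ls).2).
Qed.
Lemma Ul_nil : Ul [::] = set0.
Proof. by rewrite /Ul build_nil setU0. Qed.
Lemma El_cons l ls : El (l :: ls) = (part1 D l :&: part2 D l) :|: El ls.
Proof. by rewrite /El big_cons. Qed.
Lemma El_nil : El [::] = set0.
Proof. by rewrite /El big_nil. Qed.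

Lemma seg_paths l : tvalid adj l -> tsrc l != tdst l ->
  exists r1 r2, [/\ sp adj (tsrc l) (tdst l) r1, sp adj (tsrc l) (tdst l) r2,
    part1 D l = links_seq (tsrc l :: r1), part2 D l = links_seq (tsrc l :: r2) &
    (part1 D l :&: part2 D l = set0 \/ r1 = [:: tdst l] /\ r2 = [:: tdst l])].
Proof.
case: l => [[u v] | [u v]] /= hv hne.
  have hs : sp adj u v [:: v] by split => //=; rewrite ?hv // inE andbT hne.
  exists [:: v], [:: v]; split => //; last by right.
  - by rewrite links_cons links1 setU0.
  - by rewrite links_cons links1 setU0.
have [h1 h2 h3 _] := hD hv.
case/stpathP: h1 => r1 [a1 a2 a3 a4]; case/stpathP: h2 => r2 [b1 b2 b3 b4].
by exists r1, r2; split => //; left.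
Qed.

Lemma seg_adj l : tvalid adj l -> adjset adj (Sl l).
Proof.
case: l => [[u v] | [u v]] /= hv e.
  by rewrite /Sl /= setUid inE => /eqP ->.
have [h1 h2 _ _] := hD hv.
by rewrite /Sl /= in_setU => /orP [] he; [apply: (stpath_adjset h1) | apply: (stpath_adjset h2)].
Qed.

Lemma seg_weight l : tvalid adj l -> tweight w D l = wt w (Sl l).
Proof.
case: l => [[u v] | [u v]] /= hv.
  by rewrite /Sl /= setUid /wt big_set1.
have [_ _ h3 _] := hD hv.
by rewrite /Sl /= /wt sum_disjU.
Qed.

Lemma seg_cost l : tvalid adj l -> tcost p l = \sum_(e in part1 D l :&: part2 D l) cst p e.
Proof.
case: l => [[u v] | [u v]] /= hv.
  by rewrite setIid big_set1.
have [_ _ h3 _] := hD hv.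
by rewrite h3 big_set0.
Qed.

Lemma Ul_adj x ls t : twalk adj x ls t -> adjset adj (Ul ls).
Proof.
elim: ls x => [|l ls IH] x /=; first by rewrite Ul_nil => _ e; rewrite inE.
case=> hv _ hw'; rewrite Ul_cons => e /setUP [h | h].
  exact: (seg_adj hv).
exact: (IH _ hw').
Qed.

Lemma El_sub ls : El ls \subset Ul ls.
Proof.
elim: ls => [|l ls IH]; first by rewrite El_nil sub0set.
rewrite El_cons Ul_cons; apply: setUSS => //.
by apply/subsetP => e; rewrite /Sl in_setI in_setU => /andP [-> _].
Qed.

Lemma Ul_weight x ls t : twalk adj x ls t -> wt w (Ul ls) <= tW w D ls.
Proof.
elim: ls x => [|l ls IH] x /=.
  by rewrite Ul_nil /wt big_set0 /tW big_nil.
case=> hv _ hw'; rewrite Ul_cons /tW big_cons -/(tW w D ls) seg_weight //.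
have h : \sum_(e in Sl l :|: Ul ls) w e <= \sum_(e in Sl l) w e + \sum_(e in Ul ls) w e.
  by apply: sumU_le => e he; apply: (w_ge0 hw (Ul_adj hw')).
apply: le_trans h _; by rewrite lerD2l; apply: IH hw'.
Qed.

Lemma El_cost x ls t : twalk adj x ls t -> \sum_(e in El ls) cst p e <= tC p ls.
Proof.
elim: ls x => [|l ls IH] x /=.
  by rewrite El_nil big_set0 /tC big_nil.
case=> hv _ hw'; rewrite El_cons /tC big_cons -/(tC p ls) seg_cost //.
have h : \sum_(e in (part1 D l :&: part2 D l) :|: El ls) cst p e <=
   \sum_(e in part1 D l :&: part2 D l) cst p e + \sum_(e in El ls) cst p e.
  apply: sumU_le => e he; apply: (c_ge0 hpr (Ul_adj hw')).
  by move/subsetP: (El_sub ls); apply.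
apply: le_trans h _; by rewrite lerD2l; apply: IH hw'.
Qed.

Lemma sumU_lt (f : link V -> R) (A B : {set link V}) g :
  (forall e, e \in A :|: B -> 0 <= f e) -> g \in A -> g \in B -> 0 < f g ->
  \sum_(e in A :|: B) f e < \sum_(e in A) f e + \sum_(e in B) f e.
Proof.
move=> hf hA hB hg; rewrite sumUD ltrD2l.
apply: (sum_sub_lt (e := g)) => //.
- by apply/subsetP => e; rewrite !inE => /andP [h1 h2]; rewrite h2 andbT;
    apply: contra h1 => /eqP ->.
- by move=> e he; apply: hf; rewrite in_setU he orbT.
Qed.

Lemma Ul_weight_lt x ls t : twalk adj x ls t -> ~ ND ls -> wt w (Ul ls) < tW w D ls.
Proof.
elim: ls x => [|l ls IH] x /=; first by [].
case=> hv _ hw' hnd; rewrite Ul_cons /tW big_cons -/(tW w D ls) seg_weight //.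
have hadj : adjset adj (Sl l :|: Ul ls).
  by move=> e /setUP [h | h]; [exact: (seg_adj hv) | exact: (Ul_adj hw')].
case: (eqVneq (Sl l :&: Ul ls) set0) => hI.
  have hnd' : ~ ND ls by move=> h; apply: hnd.
  have h : \sum_(e in Sl l :|: Ul ls) w e <= \sum_(e in Sl l) w e + \sum_(e in Ul ls) w e.
    by apply: sumU_le => e he; apply: (w_ge0 hw (Ul_adj hw')).
  apply: le_lt_trans h _; by rewrite ltrD2l; apply: IH hw' hnd'.
case/set0Pn: hI => g; rewrite in_setI => /andP [g1 g2].
have h : \sum_(e in Sl l :|: Ul ls) w e < \sum_(e in Sl l) w e + \sum_(e in Ul ls) w e.
  apply: (sumU_lt _ g1 g2).
  - by move=> e he; apply: (w_ge0 hw hadj).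
  - by apply: hw; apply: (seg_adj hv).
apply: lt_le_trans h _; by rewrite lerD2l; apply: Ul_weight hw'.
Qed.


Lemma mem0 (T : finType) (C1 C2 : {set T}) X : C1 :&: C2 = set0 -> X \in C1 -> X \in C2 -> False.
Proof. by move=> h h1 h2; move/setP: h => /(_ X); rewrite in_setI h1 h2 in_set0. Qed.

Lemma cross_sub (T : finType) (P1 P2 Q1 Q2 A B : {set T}) :
  A \subset P1 :|: Q1 -> B \subset P2 :|: Q2 -> (P1 :|: P2) :&: (Q1 :|: Q2) = set0 ->
  A :&: B \subset (P1 :&: P2) :|: (Q1 :&: Q2).
Proof.
move=> hA hB hnd; apply/subsetP => X; rewrite in_setI => /andP [/(subsetP hA) h1 /(subsetP hB) h2].
move: h1 h2; rewrite !in_setU.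
case/orP => h1; case/orP => h2.
- by rewrite in_setI h1 h2.
- exfalso; apply: (mem0 hnd (_ : X \in P1 :|: P2) (_ : X \in Q1 :|: Q2)); by rewrite in_setU ?h1 ?h2 ?orbT.
- exfalso; apply: (mem0 hnd (_ : X \in P1 :|: P2) (_ : X \in Q1 :|: Q2)); by rewrite in_setU ?h1 ?h2 ?orbT.
- by rewrite !in_setI h1 h2 orbT.
Qed.

Lemma loop x y t p1 p2 q1 q2 :
  sp adj x y p1 -> sp adj x y p2 -> sp adj y t q1 -> sp adj y t q2 ->
  (links_seq (x :: p1) :|: links_seq (x :: p2)) :&: (links_seq (y :: q1) :|: links_seq (y :: q2)) = set0 ->
  (links_seq (x :: p1) :&: links_seq (x :: p2) = set0 \/ p1 = [:: y] /\ p2 = [:: y]) ->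
  ~~ uniq (x :: p1 ++ q1) ->
  exists A B g, [/\ is_stpath adj x t A, is_stpath adj x t B,
     A :|: B \subset (links_seq (x :: p1) :|: links_seq (x :: p2)) :|: (links_seq (y :: q1) :|: links_seq (y :: q2)),
     A :&: B \subset (links_seq (x :: p1) :&: links_seq (x :: p2)) :|: (links_seq (y :: q1) :&: links_seq (y :: q2)) &
     g \in (links_seq (x :: p1) :|: links_seq (x :: p2)) :|: (links_seq (y :: q1) :|: links_seq (y :: q2))
       /\ g \notin A :|: B].
Proof.
move=> [hp1 hl1 hu1] [hp2 hl2 hu2] [hq1 hm1 hv1] [hq2 hm2 hv2] hnd hkind hnu.
set P1 := links_seq (x :: p1); set P2 := links_seq (x :: p2).
set Q1 := links_seq (y :: q1); set Q2 := links_seq (y :: q2).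
have [z hzq hzp] : exists2 z, z \in q1 & z \in x :: p1.
  have huq1 : uniq q1 by case/andP: hv1.
  move: hnu; rewrite -cat_cons cat_uniq hu1 huq1 andbT /= negbK.
  by case/hasP => z h1 h2; exists z.
have hzy : z != y by apply: contraTneq hzq => ->; case/andP: hv1.
have [q1a [q1b eq1]] : exists a b, q1 = a ++ z :: b by case/splitPr: hzq => a b; exists a, b.
rewrite eq1 in hq1 hm1 hv1.
have hpz : path adj z q1b by move: hq1; rewrite cat_path => /andP [_ /= /andP [_ ->]].
have hlz : last z q1b = t by rewrite -hm1 last_cat.
have hQ1 : Q1 = links_seq (y :: q1a) :|: ((last y q1a, z) |: links_seq (z :: q1b))
  by rewrite /Q1 eq1 links_split.
have hZQ1 : links_seq (z :: q1b) \subset Q1 by rewrite hQ1; apply/subsetP => X hX; rewrite !in_setU hX !orbT.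
have hUU : forall X, X \in P1 -> X \in (P1 :|: P2) :|: (Q1 :|: Q2)
  by move=> X h; rewrite !in_setU h.
have hW2 : path adj x (p2 ++ q2) by rewrite cat_path hp2 hl2 hq2.
have hlW2 : last x (p2 ++ q2) = t by rewrite last_cat hl2.
have [B [hB1 hB2]] := walk_stpath hW2; rewrite hlW2 in hB1.
rewrite links_cat hl2 -/P2 -/Q2 in hB2.
case: hkind => [hK1 | [ep1 ep2]].
- have [pa [pb [eqp hz]]] : exists a b, p1 = a ++ b /\ z = last x a.
    by case/splitPl: hzp => a b hz; exists a, b.
  case: pb eqp => [|h pb] eqp.
    by rewrite eqp cats0 -hz in hl1; rewrite hl1 eqxx in hzy.
  rewrite eqp in hp1 hl1 hu1.
  have hW1 : path adj x (pa ++ q1b) by move: hp1; rewrite !cat_path -hz hpz => /andP [-> _].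
  have hlW1 : last x (pa ++ q1b) = t by rewrite last_cat -hz.
  have [A [hA1 hA2]] := walk_stpath hW1; rewrite hlW1 in hA1.
  rewrite links_cat -hz in hA2.
  have hP1 : P1 = links_seq (x :: pa) :|: ((z, h) |: links_seq (h :: pb)) by rewrite /P1 eqp links_split hz.
  have hgP1 : (z, h) \in P1 by rewrite hP1 !in_setU in_set1 eqxx orbT.
  have [d1 _ _] := split_disj (hu1 : uniq (x :: pa ++ h :: pb)); rewrite -hz in d1.
  have hAs : A \subset P1 :|: Q1.
    apply: (subset_trans hA2); apply/subsetP => X /setUP [hX | hX]; rewrite in_setU.
      by rewrite hP1 in_setU hX.
    by rewrite (subsetP hZQ1 X hX) orbT.
  exists A, B, (z, h); split => //.
  + apply/subsetP => X /setUP [hX | hX].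
      by move: (subsetP hAs X hX); rewrite !in_setU => /orP [] ->; rewrite ?orbT.
    by move: (subsetP hB2 X hX); rewrite !in_setU => /orP [] ->; rewrite ?orbT.
  + exact: cross_sub.
  + split; first exact: hUU.
    rewrite in_setU negb_or; apply/andP; split.
      apply/negP => /(subsetP hA2); rewrite in_setU (negbTE d1) /= => hg.
      apply: (mem0 hnd (_ : (z, h) \in P1 :|: P2) (_ : (z, h) \in Q1 :|: Q2)).
        by rewrite in_setU hgP1.
      by rewrite in_setU (subsetP hZQ1 _ hg).
    apply/negP => /(subsetP hB2); rewrite in_setU => /orP [hg | hg].
      exact: (mem0 hK1 hgP1 hg).
    apply: (mem0 hnd (_ : (z, h) \in P1 :|: P2) (_ : (z, h) \in Q1 :|: Q2)).
      by rewrite in_setU hgP1.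
    by rewrite in_setU hg orbT.
-
  rewrite ep1 in hzp.
  have hzx : z = x by move: hzp; rewrite !inE (negbTE hzy) orbF => /eqP.
  subst z.
  have hA0 : path adj x q1b := hpz.
  have [A [hA1 hA2]] := walk_stpath hA0; rewrite hlz in hA1.
  have hAQ1 : A \subset Q1 := subset_trans hA2 hZQ1.
  have hgP1 : (x, y) \in P1 by rewrite /P1 ep1 links_cons in_setU1 eqxx.
  case: (boolP (x \in q2)) => hxq2.
  + have [q2a [q2b eq2]] : exists a b, q2 = a ++ x :: b by case/splitPr: hxq2 => a b; exists a, b.
    rewrite eq2 in hq2 hm2 hv2.
    have hpx2 : path adj x q2b by move: hq2; rewrite cat_path => /andP [_ /= /andP [_ ->]].
    have hlx2 : last x q2b = t by rewrite -hm2 last_cat.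
    have [B' [hB1' hB2']] := walk_stpath hpx2; rewrite hlx2 in hB1'.
    have hBQ2 : B' \subset Q2.
      apply: (subset_trans hB2'); rewrite /Q2 eq2 links_split.
      by apply/subsetP => X hX; rewrite !in_setU hX !orbT.
    exists A, B', (x, y); split => //.
    * apply/subsetP => X /setUP [hX | hX]; rewrite !in_setU.
        by rewrite (subsetP hAQ1 X hX) !orbT.
      by rewrite (subsetP hBQ2 X hX) !orbT.
    * apply/subsetP => X; rewrite in_setI => /andP [h1 h2].
      by rewrite in_setU !in_setI (subsetP hAQ1 X h1) (subsetP hBQ2 X h2) orbT.
    * split; first exact: hUU.
      apply/negP; rewrite in_setU => /orP [hg | hg].
        apply: (mem0 hnd (_ : (x, y) \in P1 :|: P2) (_ : (x, y) \in Q1 :|: Q2)).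
          by rewrite in_setU hgP1.
        by rewrite in_setU (subsetP hAQ1 _ hg).
      apply: (mem0 hnd (_ : (x, y) \in P1 :|: P2) (_ : (x, y) \in Q1 :|: Q2)).
        by rewrite in_setU hgP1.
      by rewrite in_setU (subsetP hBQ2 _ hg) orbT.
  + set g := (last y q1a, x).
    have hgQ1 : g \in Q1 by rewrite hQ1 !in_setU in_set1 eqxx orbT.
    have [_ d2 _] := split_disj (hv1 : uniq (y :: q1a ++ x :: q1b)).
    have hxy : x != y by apply: contraNneq hzy => ->.
    exists A, B, g; split => //.
    * apply/subsetP => X /setUP [hX | hX]; rewrite !in_setU.
        by rewrite (subsetP hAQ1 X hX) !orbT.
      by move: (subsetP hB2 X hX); rewrite !in_setU => /orP [] ->; rewrite ?orbT.
    * apply: cross_sub => //; apply: (subset_trans hAQ1); exact: subsetUr.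
    * split; first by rewrite !in_setU hgQ1 !orbT.
      rewrite in_setU negb_or; apply/andP; split.
        by apply/negP => /(subsetP hA2); apply/negP.
      apply/negP => /(subsetP hB2); rewrite in_setU => /orP [hg | hg].
        apply: (mem0 hnd (_ : g \in P1 :|: P2) (_ : g \in Q1 :|: Q2)).
          by rewrite in_setU hg orbT.
        by rewrite in_setU hgQ1.
      have [_ /= h2] := links_mem hg.
      by move: h2; rewrite inE (negbTE hxy) (negbTE hxq2).
Qed.

Lemma build_inter x ls t : twalk adj x ls t -> ND ls ->
  (build D ls).1 :&: (build D ls).2 \subset El ls.
Proof.
elim: ls x => [|l ls IH] x.
  by move=> _ _; rewrite build_nil setI0 sub0set.
case=> hv _ hw' [hnd1 hnd']; rewrite build_cons El_cons /=.
apply/subsetP => X; rewrite in_setI !in_setU => /andP [/orP [h1 | h1] /orP [h2 | h2]].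
- by rewrite in_setI h1 h2.
- exfalso; apply: (mem0 hnd1 (_ : X \in Sl l) (_ : X \in Ul ls)).
    by rewrite /Sl in_setU h1.
  by rewrite /Ul in_setU h2 orbT.
- exfalso; apply: (mem0 hnd1 (_ : X \in Sl l) (_ : X \in Ul ls)).
    by rewrite /Sl in_setU h2 orbT.
  by rewrite /Ul in_setU h1.
- by rewrite (subsetP (IH _ hw' hnd') X) ?orbT // in_setI h1 h2.
Qed.

Lemma cheaper_of ls A B g : adjset adj (Ul ls) ->
  A :|: B \subset Ul ls -> g \in Ul ls -> g \notin A :|: B ->
  wt w (A :|: B) < wt w (Ul ls).
Proof.
move=> hadj hsub hg hng; apply: (sum_sub_lt (e := g)) => //.
- apply/subsetP => X hX; rewrite in_setD1 (subsetP hsub X hX) andbT.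
  by apply: contra hng => /eqP <-.
- by move=> e he; apply: (w_ge0 hw hadj).
- by apply: hw; apply: hadj.
Qed.

Lemma NDind x ls t : twalk adj x ls t -> uniq (x :: map (@tdst V) ls) -> ND ls ->
  (exists r1 r2, [/\ sp adj x t r1, sp adj x t r2,
      links_seq (x :: r1) = (build D ls).1 & links_seq (x :: r2) = (build D ls).2])
  \/ (exists A B, [/\ is_stpath adj x t A, is_stpath adj x t B, A :|: B \subset Ul ls,
      A :&: B \subset El ls & wt w (A :|: B) < wt w (Ul ls)]).
Proof.
elim: ls x => [|l ls IH] x.
  move=> -> _ _; left; exists [::], [::]; rewrite build_nil links1; split => //.
case=> hv hs hw' hu0 [hnd1 hnd'].
have hu1 : uniq (x :: tdst l :: map (@tdst V) ls) := hu0.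
move: hu1; rewrite cons_uniq in_cons negb_or => /andP [/andP [hxy hxd] hu].
have hadjU : adjset adj (Ul (l :: ls)) by apply: (Ul_adj (x := x) (t := t)).
have hsd : tsrc l != tdst l by rewrite hs.
have [p1 [p2 [hsp1 hsp2 hP1 hP2 hkind]]] := seg_paths hv hsd.
rewrite hs in hsp1 hsp2 hP1 hP2.
set y := tdst l in hsp1 hsp2 hkind hw' hu hxy.
have hSl : Sl l = links_seq (x :: p1) :|: links_seq (x :: p2) by rewrite /Sl hP1 hP2.
have hUl : Ul (l :: ls) = Sl l :|: Ul ls by rewrite Ul_cons.
have hEl : El (l :: ls) = (part1 D l :&: part2 D l) :|: El ls by rewrite El_cons.
move: hsp1 hsp2 => [hp1 hl1 hu1] [hp2 hl2 hu2].
case: (IH _ hw' hu hnd') => [[q1 [q2 [hq1 hq2 hQ1 hQ2]]] | [A' [B' [hA' hB' hsub' hint' hlt']]]].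
- have hnd : (links_seq (x :: p1) :|: links_seq (x :: p2)) :&:
             (links_seq (y :: q1) :|: links_seq (y :: q2)) = set0.
    by rewrite hQ1 hQ2 -hSl.
  have hQE : links_seq (y :: q1) :&: links_seq (y :: q2) \subset El ls.
    by rewrite hQ1 hQ2; apply: build_inter hw' hnd'.
  have hUU : (links_seq (x :: p1) :|: links_seq (x :: p2)) :|:
             (links_seq (y :: q1) :|: links_seq (y :: q2)) = Ul (l :: ls).
    by rewrite hQ1 hQ2 -hSl hUl.
  have hEE : (links_seq (x :: p1) :&: links_seq (x :: p2)) :|:
             (links_seq (y :: q1) :&: links_seq (y :: q2)) \subset El (l :: ls).
    by rewrite hEl -hP1 -hP2; apply: setUS.
  have hkind' : links_seq (x :: p1) :&: links_seq (x :: p2) = set0 \/ p1 = [:: y] /\ p2 = [:: y].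
    by case: hkind => [h | h]; [left; rewrite -hP1 -hP2 | right].
  case: (boolP (uniq (x :: p1 ++ q1))) => hc1; last first.
    right; have [A [B [g [hA hB hsub hint [hg hng]]]]] :=
      loop (And3 hp1 hl1 hu1) (And3 hp2 hl2 hu2) hq1 hq2 hnd hkind' hc1.
    rewrite hUU in hsub hg.
    exists A, B; split => //; first exact: (subset_trans hint hEE).
    exact: (cheaper_of hadjU hsub hg hng).
  case: (boolP (uniq (x :: p2 ++ q2))) => hc2; last first.
    right.
    have hnd2 : (links_seq (x :: p2) :|: links_seq (x :: p1)) :&:
             (links_seq (y :: q2) :|: links_seq (y :: q1)) = set0.
      by rewrite [links_seq (x :: p2) :|: _]setUC [links_seq (y :: q2) :|: _]setUC.
    have hkind2 : links_seq (x :: p2) :&: links_seq (x :: p1) = set0 \/ p2 = [:: y] /\ p1 = [:: y].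
      by case: hkind' => [h | [h1 h2]]; [left; rewrite setIC | right].
    have [A [B [g [hA hB hsub hint [hg hng]]]]] :=
      loop (And3 hp2 hl2 hu2) (And3 hp1 hl1 hu1) hq2 hq1 hnd2 hkind2 hc2.
    rewrite [links_seq (x :: p2) :|: _]setUC [links_seq (y :: q2) :|: _]setUC hUU in hsub hg.
    rewrite [links_seq (x :: p2) :&: _]setIC [links_seq (y :: q2) :&: _]setIC in hint.
    exists A, B; split => //; first exact: (subset_trans hint hEE).
    exact: (cheaper_of hadjU hsub hg hng).
  left; exists (p1 ++ q1), (p2 ++ q2).
  case: hq1 => hq1p hq1l hq1u; case: hq2 => hq2p hq2l hq2u.
  split.
  + by split => //; [rewrite cat_path hp1 hl1 | rewrite last_cat hl1].
  + by split => //; [rewrite cat_path hp2 hl2 | rewrite last_cat hl2].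
  + by rewrite links_cat hl1 hQ1 build_cons -hP1.
  + by rewrite links_cat hl2 hQ2 build_cons -hP2.
- right.
  case/stpathP: hA' => a1 [ha1 ha2 ha3 ha4]; case/stpathP: hB' => b1 [hb1 hb2 hb3 hb4].
  have hW1 : path adj x (p1 ++ a1) by rewrite cat_path hp1 hl1.
  have hW2 : path adj x (p2 ++ b1) by rewrite cat_path hp2 hl2.
  have [A [hA1 hA2]] := walk_stpath hW1; have [B [hB1 hB2]] := walk_stpath hW2.
  rewrite last_cat hl1 ha2 in hA1; rewrite last_cat hl2 hb2 in hB1.
  rewrite links_cat hl1 -ha4 -hP1 in hA2; rewrite links_cat hl2 -hb4 -hP2 in hB2.
  have hsubU' : A' :|: B' \subset Ul ls := hsub'.
  have hnd : (part1 D l :|: part2 D l) :&: (A' :|: B') = set0.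
    apply: disjP => X h1 h2; apply: (mem0 hnd1 h1); exact: (subsetP hsubU').
  exists A, B; split => //.
  + rewrite hUl; apply/subsetP => X /setUP [hX | hX].
      move: (subsetP hA2 X hX); rewrite in_setU => /orP [h | h].
        by rewrite in_setU /Sl in_setU h.
      by rewrite in_setU (subsetP hsubU' X) ?orbT // in_setU h.
    move: (subsetP hB2 X hX); rewrite in_setU => /orP [h | h].
      by rewrite in_setU /Sl in_setU h orbT.
    by rewrite in_setU (subsetP hsubU' X) ?orbT // in_setU h orbT.
  + rewrite hEl; apply: (subset_trans (cross_sub hA2 hB2 hnd)); exact: setUS.
  + rewrite hUl /wt [X in _ < X]sum_disjU //.
    have h1 : \sum_(e in A :|: B) w e <= \sum_(e in Sl l :|: (A' :|: B')) w e.
      apply: sum_sub.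
        apply/subsetP => X /setUP [hX | hX].
          move: (subsetP hA2 X hX); rewrite !in_setU => /orP [h | h].
            by rewrite h.
          by rewrite h !orbT.
        move: (subsetP hB2 X hX); rewrite !in_setU => /orP [h | h].
          by rewrite h orbT.
        by rewrite h !orbT.
      move=> e he; apply: (w_ge0 hw hadjU); rewrite hUl; move: he.
      by case/setUP => h; rewrite in_setU ?h // (subsetP hsubU' e h) orbT.
    have h2 : \sum_(e in Sl l :|: (A' :|: B')) w e <=
              \sum_(e in Sl l) w e + \sum_(e in A' :|: B') w e.
      apply: sumU_le => e he; apply: (w_ge0 hw hadjU); rewrite hUl in_setU.
      by rewrite (subsetP hsubU' e he) orbT.
    have h3 : \sum_(e in A' :|: B') w e < \sum_(e in Ul ls) w e := hlt'.
    apply: (le_lt_trans h1); apply: (le_lt_trans h2); by rewrite ltrD2l.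
Qed.

Lemma cut_seg x ls t (X : {set V}) : twalk adj x ls t -> x \in X -> t \notin X ->
  exists l, [/\ l \in ls, tvalid adj l, tsrc l \in X & tdst l \notin X].
Proof.
elim: ls x => [|l ls IH] x.
  by move=> /= ->; move=> ->.
case=> hv hs hw' hx ht.
case: (boolP (tdst l \in X)) => hd.
  have [l' [h1 h2 h3 h4]] := IH _ hw' hd ht.
  by exists l'; split => //; rewrite inE h1 orbT.
by exists l; split => //; [rewrite mem_head | rewrite hs].
Qed.

Lemma path_leave x r (X : {set V}) : path adj x r -> x \in X -> last x r \notin X ->
  exists g, [/\ g \in links_seq (x :: r), g.1 \in X & g.2 \notin X].
Proof.
elim: r x => [|y r IH] x /=.
  by move=> _ ->.
case/andP=> _ hp hx hl.
case: (boolP (y \in X)) => hy.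
  have [g [h1 h2 h3]] := IH _ hp hy hl.
  by exists g; split => //; rewrite links_cons in_setU1 h1 orbT.
by exists (x, y); split => //; rewrite links_cons in_setU1 eqxx.
Qed.

Lemma part_sub ls l : l \in ls ->
  [/\ part1 D l \subset Ul ls, part2 D l \subset Ul ls & part1 D l :&: part2 D l \subset El ls].
Proof.
elim: ls => [|l0 ls IH] //; rewrite inE => /orP [/eqP -> | hl].
  rewrite Ul_cons El_cons /Sl; split.
  - by apply: subset_trans (subsetUl _ _) (subsetUl _ _).
  - by apply: subset_trans (subsetUr _ _) (subsetUl _ _).
  - exact: subsetUl.
have [h1 h2 h3] := IH hl; rewrite Ul_cons El_cons; split.
- by apply: subset_trans h1 (subsetUr _ _).
- by apply: subset_trans h2 (subsetUr _ _).
- by apply: subset_trans h3 (subsetUr _ _).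
Qed.

Lemma card2 (T : finType) (S : {set T}) a b : a \in S -> b \in S -> a != b -> (1 < #|S|)%N.
Proof.
move=> ha hb hab; rewrite (cardsD1 a S) ha add1n ltnS card_gt0.
by apply/set0Pn; exists b; rewrite in_setD1 eq_sym hab hb.
Qed.

Definition lsrc (le : link V * bool) : V := le.1.1.
Definition ldst (le : link V * bool) : V := le.1.2.

Lemma lwalk_path (r : seq (link V * bool)) x y : lwalk lsrc ldst x r y ->
  (forall le, le \in r -> adj le.1.1 le.1.2) ->
  [/\ path adj x (map ldst r), last x (map ldst r) = y &
      forall g, g \in links_seq (x :: map ldst r) -> exists b, (g, b) \in r].
Proof.
elim: r x => [|le r IH] x /=.
  by move=> /eqP -> _; split => // g; rewrite links1 inE.
case/andP => /eqP hs hw' hadj.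
have hadj' : forall le', le' \in r -> adj le'.1.1 le'.1.2.
  by move=> le' h; apply: hadj; rewrite inE h orbT.
have [h1 h2 h3] := IH _ hw' hadj'.
split => //.
- rewrite h1 andbT; have := hadj le (mem_head _ _); rewrite /ldst -hs /lsrc //.
- move=> g; rewrite links_cons => /setU1P [-> | hg].
    exists le.2; rewrite inE; apply/orP; left.
    by rewrite -hs /lsrc /ldst -!surjective_pairing.
  by have [b hb] := h3 g hg; exists b; rewrite inE hb orbT.
Qed.

Lemma menger_app x ls t : twalk adj x ls t ->
  exists A B, [/\ is_stpath adj x t A, is_stpath adj x t B, A :|: B \subset Ul ls
    & A :&: B \subset El ls].
Proof.
move=> hwk.
case: (eqVneq x t) => [<- | hxt].
  have h0 : is_stpath adj x x set0.
    by rewrite -(links1 x); apply: (stpath_of (r := [::])).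
  by exists set0, set0; rewrite setU0 setI0 !sub0set; split.
set H := [set le : link V * bool | (le.1 \in Ul ls) && (le.2 || (le.1 \in El ls))].
have hcut : forall X : {set V}, x \in X -> t \notin X ->
    (1 < #|[set le in H | (lsrc le \in X) && (ldst le \notin X)]|)%N.
  move=> X hx ht; have [l [hl hv hs hd]] := cut_seg hwk hx ht.
  have [s1 s2 s3] := part_sub hl.
  case: l hl hv hs hd s1 s2 s3 => [e | [u v]] hl /= hv hs hd s1 s2 s3.
    have he1 : e \in Ul ls by apply: (subsetP s1); rewrite inE.
    have he2 : e \in El ls by apply: (subsetP s3); rewrite setIid inE.
    apply: (card2 (a := (e, true)) (b := (e, false))).
    - by move: he1; rewrite !inE /lsrc /ldst /= => ->; rewrite hs hd.
    - by move: he1 he2; rewrite !inE /lsrc /ldst /= => -> ->; rewrite hs hd.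
    - by rewrite xpair_eqE andbF.
  have [h1 h2 h3 _] := hD hv.
  case/stpathP: h1 => r1 [a1 a2 a3 a4]; case/stpathP: h2 => r2 [b1 b2 b3 b4].
  have a2' : last u r1 \notin X by rewrite a2.
  have b2' : last u r2 \notin X by rewrite b2.
  have [g1 [g11 g12 g13]] := path_leave a1 hs a2'.
  have [g2 [g21 g22 g23]] := path_leave b1 hs b2'.
  rewrite -a4 in g11; rewrite -b4 in g21.
  apply: (card2 (a := (g1, true)) (b := (g2, true))).
  - by move: (subsetP s1 _ g11); rewrite !inE /lsrc /ldst /= => ->; rewrite g12 g13.
  - by move: (subsetP s2 _ g21); rewrite !inE /lsrc /ldst /= => ->; rewrite g22 g23.
  - apply/negP => /eqP [heq]; rewrite heq in g11.
    by move/setP: h3 => /(_ g2); rewrite in_setI g11 g21 in_set0.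
have [r1 [r2 [hr1 hr2 hs1 hs2 hdis]]] := menger2 hxt hcut.
have hadjU := Ul_adj hwk.
have hadjr : forall r : seq (link V * bool), {subset r <= H} -> forall le, le \in r -> adj le.1.1 le.1.2.
  by move=> r hr le /hr; rewrite inE => /andP [h _]; apply: hadjU.
have [p1 l1 m1] := lwalk_path hr1 (hadjr _ hs1).
have [p2 l2 m2] := lwalk_path hr2 (hadjr _ hs2).
have [A [hA1 hA2]] := walk_stpath p1; have [B [hB1 hB2]] := walk_stpath p2.
rewrite l1 in hA1; rewrite l2 in hB1.
exists A, B; split => //.
- apply/subsetP => g /setUP [] hg.
    have [b hb] := m1 g (subsetP hA2 g hg).
    by move: (hs1 _ hb); rewrite inE => /andP [].
  have [b hb] := m2 g (subsetP hB2 g hg).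
  by move: (hs2 _ hb); rewrite inE => /andP [].
- apply/subsetP => g; rewrite in_setI => /andP [hgA hgB].
  have [b1 hb1] := m1 g (subsetP hA2 g hgA).
  have [b2 hb2] := m2 g (subsetP hB2 g hgB).
  have hne : b1 != b2.
    apply/negP => /eqP heq; rewrite heq in hb1.
    by move: (hdis _ hb1); rewrite hb2.
  case: b1 b2 hb1 hb2 hne => [] [] hb1 hb2 hne //.
  + by move: (hs2 _ hb2); rewrite inE /= => /andP [].
  + by move: (hs1 _ hb1); rewrite inE /= => /andP [].
Qed.

End L2.


Section Final.
Variables (R : realType) (V : finType) (adj : rel V) (p w : link V -> R).
Variable D : V -> V -> {set link V} * {set link V}.
Hypothesis hw : forall e : link V, adj e.1 e.2 -> 0 < w e.
Hypothesis hpr : forall e : link V, adj e.1 e.2 -> 0 < p e < 1.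
Hypothesis hD : EDSPoP_spec adj w D.

Lemma ln_prod (K : {set link V}) : adjset adj K ->
  0 < \prod_(e in K) (1 - p e) /\ ln (\prod_(e in K) (1 - p e)) = - \sum_(e in K) cst p e.
Proof.
move=> hK; rewrite /cst sumrN opprK.
apply: (big_ind2 (fun x y => 0 < x /\ ln x = y)).
- by rewrite ln1.
- move=> x1 x2 y1 y2 [h1 h2] [h3 h4]; split; first exact: mulr_gt0.
  by rewrite lnM ?posrE // h2 h4.
- move=> e he; split => //; case/andP: (hpr (hK e he)) => h1 h2; lra.
Qed.

Lemma surv_iff (A B : {set link V}) (S : R) : adjset adj (A :&: B) -> 0 < S ->
  (S <= surv p A B) <-> (\sum_(e in A :&: B) cst p e <= - ln S).
Proof.
move=> hK hS; have [h1 h2] := ln_prod hK.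
rewrite /surv; split => h.
- have : ln S <= ln (\prod_(e in A :&: B) (1 - p e)) by rewrite ler_ln ?posrE.
  rewrite h2; lra.
- rewrite -ler_ln ?posrE // h2; lra.
Qed.

Lemma rsp_of s t (A B : {set link V}) : is_stpath adj s t A -> is_stpath adj s t B ->
  exists ls, [/\ tpath adj s t ls, tW w D ls <= WCO w A B &
                 tC p ls <= \sum_(e in A :&: B) cst p e].
Proof.
case/stpathP => r1 [a1 a2 a3 a4]; case/stpathP => r2 [b1 b2 b3 b4].
have hsp : spair adj s t r1 r2 by split; split.
have [ls0 [h1 h2 h3]] := L1 hw hpr hD hsp (leqnn _).
have [ls [g1 g2 g3]] := tshort hw hpr hD h1.
exists ls; split => //.
- by apply: (le_trans g2); rewrite /WCO a4 b4.
- by apply: (le_trans g3); rewrite a4 b4.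
Qed.

Lemma good s t ls : tpath adj s t ls ->
  exists A B, [/\ is_stpath adj s t A, is_stpath adj s t B, A :&: B \subset El D ls &
     ((A, B) = build D ls \/ wt w (A :|: B) < tW w D ls)].
Proof.
case=> hwk hu.
have hUw := Ul_weight hw hD hwk.
case: (classic (ND D ls)) => hnd.
  case: (NDind hw hD hwk hu hnd) => [[r1 [r2 [[a1 a2 a3] [b1 b2 b3] h1 h2]]] | [A [B [hA hB _ hI hlt]]]].
    exists (build D ls).1, (build D ls).2; split.
    - by rewrite -h1 -a2; apply: stpath_of.
    - by rewrite -h2 -b2; apply: stpath_of.
    - exact: (build_inter hwk hnd).
    - by left; rewrite -surjective_pairing.
  exists A, B; split => //; right; exact: lt_le_trans hlt hUw.
have [A [B [hA hB hsub hI]]] := menger_app hD hwk.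
exists A, B; split => //; right.
apply: le_lt_trans (Ul_weight_lt hw hD hwk hnd).
apply: sum_sub => // e he; apply: (w_ge0 hw (Ul_adj hD hwk)) he.
Qed.

End Final.

Theorem theorem3 (R : realType) (V : finType) (adj : rel V)
    (p w : link V -> R) (pmax : R) (s t : V) (S : R) :
  pmax < 1 ->
  (forall e : link V, adj e.1 e.2 -> 0 < p e <= pmax) ->
  (forall e : link V, adj e.1 e.2 -> 0 < w e) ->
  (1 - pmax) ^+ nlinks adj <= S <= 1 ->
  forall D : V -> V -> {set link V} * {set link V},
  EDSPoP_spec adj w D ->
  ((exists A B, feasible_conn adj p s t S A B) ->
     (exists ls, RSP_feasible adj p s t S ls) /\
     (forall ls, RSP_optimal adj p w D s t S ls ->
        feasible_conn adj p s t S (build D ls).1 (build D ls).2 /\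
        (forall A B, feasible_conn adj p s t S A B ->
           WCO w (build D ls).1 (build D ls).2 <= WCO w A B)))
  /\
  (~ (exists A B, feasible_conn adj p s t S A B) ->
     ~ (exists ls, RSP_feasible adj p s t S ls)).
Proof.
move=> hpmax hp hw hS D hD.
have hpr : forall e : link V, adj e.1 e.2 -> 0 < p e < 1.
  by move=> e he; case/andP: (hp e he) => h1 h2; rewrite h1 /=; apply: le_lt_trans h2 hpmax.
have hS0 : 0 < S.
  case/andP: hS => h1 _; apply: lt_le_trans h1; apply: exprn_gt0; lra.
have cost_of : forall A B, feasible_conn adj p s t S A B ->
    \sum_(e in A :&: B) cst p e <= - ln S.
  move=> A B [hA [hB hsv]]; apply/(surv_iff hpr _ hS0) => //.
  move=> e; rewrite in_setI => /andP [he _]; exact: (stpath_adjset hA he).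
have feas_of : forall A B, is_stpath adj s t A -> is_stpath adj s t B ->
    \sum_(e in A :&: B) cst p e <= - ln S -> feasible_conn adj p s t S A B.
  move=> A B hA hB hc; split => //; split => //; apply/(surv_iff hpr _ hS0) => //.
  move=> e; rewrite in_setI => /andP [he _]; exact: (stpath_adjset hA he).
have El_le : forall ls (A B : {set link V}), tpath adj s t ls -> A :&: B \subset El D ls ->
    \sum_(e in A :&: B) cst p e <= tC p ls.
  move=> ls A B [hwk _] hsub; apply: le_trans (El_cost hpr hD hwk).
  apply: sum_sub => // e he; apply: (c_ge0 hpr (Ul_adj hD hwk)).
  by move/subsetP: (El_sub D ls); apply.
split.
- move=> [A [B hf]]; split.
    have [hA [hB _]] := hf.
    have [ls [h1 h2 h3]] := rsp_of hw hpr hD hA hB.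
    by exists ls; split => //; apply: le_trans h3 (cost_of _ _ hf).
  move=> ls [[htp hC] hopt].
  have [A' [B' [hA' hB' hI hcase]]] := good hw hD htp.
  case: hcase => [hb | hlt].
    rewrite -hb /=; split.
      by apply: feas_of => //; apply: le_trans (El_le _ _ _ htp hI) hC.
    move=> A2 B2 hf2.
    have [hA2 [hB2 _]] := hf2.
    have [ls2 [h1 h2 h3]] := rsp_of hw hpr hD hA2 hB2.
    have hfe2 : RSP_feasible adj p s t S ls2 by split => //; apply: le_trans h3 (cost_of _ _ hf2).
    have hUw := Ul_weight hw hD (proj1 htp).
    have hx : WCO w A' B' <= tW w D ls by move: hUw; rewrite /Ul -hb.
    exact: le_trans hx (le_trans (hopt _ hfe2) h2).
  exfalso.
  have [ls2 [h1 h2 h3]] := rsp_of hw hpr hD hA' hB'.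
  have hfe2 : RSP_feasible adj p s t S ls2.
    split => //; apply: le_trans h3 _; apply: le_trans (El_le _ _ _ htp hI) hC.
  have := hopt _ hfe2; have : tW w D ls2 < tW w D ls := le_lt_trans h2 hlt.
  by move=> h h'; move: (lt_le_trans h h'); rewrite ltxx.
- move=> hno [ls [htp hC]]; apply: hno.
  have [A' [B' [hA' hB' hI _]]] := good hw hD htp.
  exists A', B'; apply: feas_of => //; apply: le_trans (El_le _ _ _ htp hI) hC.
Qed.
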